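(* Let $(n_k)_{k\ge1}$ be a strictly increasing sequence of positive integers. There exists an infinite set $\mathcal{K}\subset\mathbb{N}$ such that the set $$L\Big(\{m\in\mathbb{N}: m\ge2\}\setminus\bigcup_{k\in\mathcal{K}}\{m\in\mathbb{N}: n_k\le m<n_{k+1}\}\Big)$$ is lineable.
   Context: $\ell^\infty$ is the space of bounded real sequences with the sup norm. For $x\in\ell^\infty$, $L_x$ denotes the set of accumulation points (subsequential limits) of $x$. For a set $A$ of cardinalities, $L(A)=\{x\in\ell^\infty: |L_x|\in A\}$. A subset $Y$ of a vector space is lineable if $Y\cup\{0\}$ contains an infinite-dimensional linear subspace. *)

(* Defs.v *)
From Stdlib Require Import Reals List.
Open Scope R_scope.

Definition bounded_seq (x : nat -> R) : Prop :=
  exists M : R, forall t : nat, Rabs (x t) <= M.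

Definition accum_pt (x : nat -> R) (a : R) : Prop :=
  exists phi : nat -> nat,
    (forall k, (phi k < phi (S k))%nat) /\ Un_cv (fun k => x (phi k)) a.

Definition has_card (P : R -> Prop) (m : nat) : Prop :=
  exists l : list R, NoDup l /\ length l = m /\ (forall a, P a <-> In a l).

Definition Lset (A : nat -> Prop) (x : nat -> R) : Prop :=
  bounded_seq x /\ exists m : nat, A m /\ has_card (accum_pt x) m.

Definition zero_seq : nat -> R := fun _ => 0.

Definition lin_subspace (S : (nat -> R) -> Prop) : Prop :=
  (forall x, S x -> bounded_seq x) /\
  S zero_seq /\
  (forall x y, S x -> S y -> S (fun t => x t + y t)) /\
  (forall (c : R) x, S x -> S (fun t => c * x t)).

Fixpoint lincomb (n : nat) (c : nat -> R) (v : nat -> nat -> R) (t : nat) : R :=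
  match n with
  | O => 0
  | S n' => lincomb n' c v t + c n' * v n' t
  end.

Definition lin_indep (n : nat) (v : nat -> nat -> R) : Prop :=
  forall c : nat -> R, (forall t, lincomb n c v t = 0) ->
    forall i, (i < n)%nat -> c i = 0.

Definition inf_dim (S : (nat -> R) -> Prop) : Prop :=
  forall n : nat, exists v : nat -> nat -> R,
    (forall i, (i < n)%nat -> S (v i)) /\ lin_indep n v.

Definition lineable (Y : (nat -> R) -> Prop) : Prop :=
  exists S : (nat -> R) -> Prop,
    lin_subspace S /\ inf_dim S /\ (forall x, S x -> Y x \/ x = zero_seq).

(* Main.v *)
Require Import Defs.
From Stdlib Require Import Reals List Lia Lra Arith FinFun Classical FunctionalExtensionality.
Open Scope R_scope.

Fixpoint PM (n : nat -> nat) (i : nat) : nat * nat :=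
  match i with
  | O => (1%nat, 2%nat)
  | S i' => let p := (fst (PM n i') * snd (PM n i'))%nat in (p, n (p + 2)%nat)
  end.
Definition Pp n i := fst (PM n i).
Definition Mm n i := snd (PM n i).

Lemma Pp0 n : Pp n 0 = 1%nat. Proof. reflexivity. Qed.
Lemma Mm0 n : Mm n 0 = 2%nat. Proof. reflexivity. Qed.
Lemma PpS n i : Pp n (S i) = (Pp n i * Mm n i)%nat. Proof. reflexivity. Qed.
Lemma MmS n i : Mm n (S i) = n (Pp n (S i) + 2)%nat. Proof. reflexivity. Qed.

Section A.
Lemma n_ge (n : nat -> nat)
  (hpos : forall k : nat, (1 <= k)%nat -> (0 < n k)%nat)
  (hinc : forall k : nat, (1 <= k)%nat -> (n k < n (S k))%nat) :
  forall k, (1 <= k)%nat -> (k <= n k)%nat.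
Proof.
  induction k; intros H. lia.
  destruct (Nat.eq_dec k 0). subst. specialize (hpos 1%nat). lia.
  specialize (IHk ltac:(lia)). specialize (hinc k ltac:(lia)). lia.
Qed.

Lemma n_mono (n : nat -> nat)
  (hinc : forall k : nat, (1 <= k)%nat -> (n k < n (S k))%nat) :
  forall a d, (1 <= a)%nat -> (n a <= n (a + d))%nat.
Proof.
  intros a d Ha; induction d. rewrite Nat.add_0_r; lia.
  rewrite Nat.add_succ_r. specialize (hinc (a + d)%nat ltac:(lia)). lia.
Qed.

Lemma n_mono' (n : nat -> nat)
  (hinc : forall k : nat, (1 <= k)%nat -> (n k < n (S k))%nat) :
  forall a b, (1 <= a)%nat -> (a <= b)%nat -> (n a <= n b)%nat.
Proof.
  intros a b Ha Hab. replace b with (a + (b - a))%nat by lia. apply n_mono; auto.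
Qed.
End A.

Lemma Mm_ge2 n (hpos : forall k : nat, (1 <= k)%nat -> (0 < n k)%nat)
  (hinc : forall k : nat, (1 <= k)%nat -> (n k < n (S k))%nat) :
  forall i, (2 <= Mm n i)%nat.
Proof.
  intros [|i]. rewrite Mm0; lia. rewrite MmS.
  pose proof (n_ge n hpos hinc (Pp n (S i) + 2) ltac:(lia)). lia.
Qed.

Lemma Pp_pos n (hpos : forall k : nat, (1 <= k)%nat -> (0 < n k)%nat)
  (hinc : forall k : nat, (1 <= k)%nat -> (n k < n (S k))%nat) :
  forall i, (S i <= Pp n i)%nat.
Proof.
  induction i. rewrite Pp0; lia. rewrite PpS.
  pose proof (Mm_ge2 n hpos hinc i). nia.
Qed.

Lemma Pp_lt n (hpos : forall k : nat, (1 <= k)%nat -> (0 < n k)%nat)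
  (hinc : forall k : nat, (1 <= k)%nat -> (n k < n (S k))%nat) :
  forall i d, (Pp n i < Pp n (S i + d))%nat.
Proof.
  intros i d; induction d.
  - rewrite Nat.add_0_r, PpS. pose proof (Mm_ge2 n hpos hinc i). pose proof (Pp_pos n hpos hinc i). nia.
  - rewrite Nat.add_succ_r, PpS. pose proof (Mm_ge2 n hpos hinc (S i + d)). nia.
Qed.

Lemma Pp_lt' n (hpos : forall k : nat, (1 <= k)%nat -> (0 < n k)%nat)
  (hinc : forall k : nat, (1 <= k)%nat -> (n k < n (S k))%nat) :
  forall i j, (i < j)%nat -> (Pp n i < Pp n j)%nat.
Proof.
  intros i j H. replace j with (S i + (j - S i))%nat by lia. apply Pp_lt; auto.
Qed.

Lemma Pp_le n (hpos : forall k : nat, (1 <= k)%nat -> (0 < n k)%nat)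
  (hinc : forall k : nat, (1 <= k)%nat -> (n k < n (S k))%nat) :
  forall i j, (i <= j)%nat -> (Pp n i <= Pp n j)%nat.
Proof.
  intros i j H. destruct (Nat.eq_dec i j). subst; lia.
  pose proof (Pp_lt' n hpos hinc i j ltac:(lia)). lia.
Qed.

Lemma Mm_le n (hpos : forall k : nat, (1 <= k)%nat -> (0 < n k)%nat)
  (hinc : forall k : nat, (1 <= k)%nat -> (n k < n (S k))%nat) :
  forall i j, (1 <= i)%nat -> (i <= j)%nat -> (Mm n i <= Mm n j)%nat.
Proof.
  intros [|i] [|j] H1 H2; try lia. rewrite !MmS. apply (n_mono' n hinc); try lia.
  pose proof (Pp_le n hpos hinc (S i) (S j) H2). lia.
Qed.

Lemma Pp_div n : forall j d, exists R, Pp n (S (j + d)) = (Pp n j * Mm n j * R)%nat.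
Proof.
  intros j d; induction d.
  - exists 1%nat. rewrite Nat.add_0_r, PpS. lia.
  - destruct IHd as [R HR]. exists (R * Mm n (S (j + d)))%nat.
    rewrite Nat.add_succ_r, (PpS n (S (j+d))), HR. lia.
Qed.

Lemma Pp_div' n : forall j i, (j < i)%nat -> exists R, Pp n i = (Pp n j * Mm n j * R)%nat.
Proof.
  intros j i H. replace i with (S (j + (i - S j)))%nat by lia. apply Pp_div.
Qed.
Definition vv (n : nat -> nat) (i t : nat) : R := INR ((t / Pp n i) mod Mm n i).


Lemma vv_period n (hpos : forall k : nat, (1 <= k)%nat -> (0 < n k)%nat)
  (hinc : forall k : nat, (1 <= k)%nat -> (n k < n (S k))%nat) :
  forall i j t, (j <= i)%nat -> vv n j (t + Pp n (S i)) = vv n j t.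
Proof.
  intros i j t H. unfold vv. f_equal.
  destruct (Pp_div' n j (S i) ltac:(lia)) as [R HR]. rewrite HR.
  pose proof (Pp_pos n hpos hinc j).
  replace (Pp n j * Mm n j * R)%nat with ((Mm n j * R) * Pp n j)%nat by lia.
  rewrite Nat.div_add by lia.
  replace (Mm n j * R)%nat with (R * Mm n j)%nat by lia.
  apply Nat.Div0.mod_add.
Qed.

Lemma vv_low n (hpos : forall k : nat, (1 <= k)%nat -> (0 < n k)%nat)
  (hinc : forall k : nat, (1 <= k)%nat -> (n k < n (S k))%nat) :
  forall i j k, (j < i)%nat -> vv n j (k * Pp n i) = 0.
Proof.
  intros i j k H. unfold vv.
  destruct (Pp_div' n j i H) as [R HR]. rewrite HR.
  pose proof (Pp_pos n hpos hinc j).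
  replace (k * (Pp n j * Mm n j * R))%nat with ((k * R * Mm n j) * Pp n j)%nat by lia.
  rewrite Nat.div_mul by lia. rewrite Nat.Div0.mod_mul. reflexivity.
Qed.

Lemma vv_diag n (hpos : forall k : nat, (1 <= k)%nat -> (0 < n k)%nat)
  (hinc : forall k : nat, (1 <= k)%nat -> (n k < n (S k))%nat) :
  forall i k, (k < Mm n i)%nat -> vv n i (k * Pp n i) = INR k.
Proof.
  intros i k H. unfold vv. pose proof (Pp_pos n hpos hinc i).
  rewrite Nat.div_mul by lia. rewrite Nat.mod_small; auto.
Qed.

Lemma vv_high n (hpos : forall k : nat, (1 <= k)%nat -> (0 < n k)%nat)
  (hinc : forall k : nat, (1 <= k)%nat -> (n k < n (S k))%nat) :
  forall i j, (i < j)%nat -> vv n j (Pp n i) = 0.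
Proof.
  intros i j H. unfold vv. rewrite Nat.div_small. rewrite Nat.Div0.mod_0_l. reflexivity.
  apply Pp_lt'; auto.
Qed.

Lemma vv_bound n (hpos : forall k : nat, (1 <= k)%nat -> (0 < n k)%nat)
  (hinc : forall k : nat, (1 <= k)%nat -> (n k < n (S k))%nat) :
  forall i t, Rabs (vv n i t) <= INR (Mm n i).
Proof.
  intros i t. unfold vv. rewrite Rabs_right by apply Rle_ge, pos_INR.
  apply le_INR. pose proof (Mm_ge2 n hpos hinc i).
  pose proof (Nat.mod_upper_bound (t / Pp n i) (Mm n i) ltac:(lia)). lia.
Qed.

Lemma lincomb_ext d c1 c2 v t : (forall i, (i < d)%nat -> c1 i = c2 i) ->
  lincomb d c1 v t = lincomb d c2 v t.
Proof.
  induction d; intros H; simpl. reflexivity.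
  rewrite IHd by (intros; apply H; lia). rewrite (H d) by lia. reflexivity.
Qed.

Lemma lincomb_add d c1 c2 v t :
  lincomb d (fun i => c1 i + c2 i) v t = lincomb d c1 v t + lincomb d c2 v t.
Proof. induction d; simpl. lra. rewrite IHd. ring. Qed.

Lemma lincomb_scal d a c v t :
  lincomb d (fun i => a * c i) v t = a * lincomb d c v t.
Proof. induction d; simpl. ring. rewrite IHd. ring. Qed.

Lemma lincomb_pad d e c v t :
  lincomb (d + e) (fun i => if (i <? d)%nat then c i else 0) v t = lincomb d c v t.
Proof.
  induction e.
  - rewrite Nat.add_0_r. apply lincomb_ext. intros i Hi.
    destruct (Nat.ltb_spec i d); [reflexivity | lia].
  - rewrite Nat.add_succ_r. simpl. rewrite IHe.
    destruct (Nat.ltb_spec (d + e) d); [lia|]. ring.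
Qed.

Lemma lincomb_zero d c v t : (forall i, (i < d)%nat -> c i = 0) -> lincomb d c v t = 0.
Proof.
  induction d; intros H; simpl. reflexivity.
  rewrite IHd by (intros; apply H; lia). rewrite (H d) by lia. ring.
Qed.



Lemma lincomb_vzero d c v t : (forall j, (j < d)%nat -> v j t = 0) -> lincomb d c v t = 0.
Proof.
  induction d; intros H; simpl. reflexivity.
  rewrite IHd by (intros; apply H; lia). rewrite (H d) by lia. ring.
Qed.

Lemma lincomb_single d c v t i : (i < d)%nat ->
  (forall j, (j < d)%nat -> j <> i -> v j t = 0) -> lincomb d c v t = c i * v i t.
Proof.
  induction d; intros Hi H. lia. simpl.
  destruct (Nat.eq_dec i d).
  - subst. rewrite lincomb_vzero. ring. intros j Hj. apply H; lia.
  - rewrite IHd by (try lia; intros; apply H; lia). rewrite (H d) by lia. ring.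
Qed.
Lemma L_period n (hpos : forall k : nat, (1 <= k)%nat -> (0 < n k)%nat)
  (hinc : forall k : nat, (1 <= k)%nat -> (n k < n (S k))%nat) :
  forall i c d t, (d <= S i)%nat -> lincomb d c (vv n) (t + Pp n (S i)) = lincomb d c (vv n) t.
Proof.
  intros i c d t; induction d; intros H; simpl. reflexivity.
  rewrite IHd by lia. rewrite (vv_period n hpos hinc i d t) by lia. reflexivity.
Qed.

Lemma L_period_k n (hpos : forall k : nat, (1 <= k)%nat -> (0 < n k)%nat)
  (hinc : forall k : nat, (1 <= k)%nat -> (n k < n (S k))%nat) :
  forall i c t k, lincomb (S i) c (vv n) (t + k * Pp n (S i)) = lincomb (S i) c (vv n) t.
Proof.
  intros i c t k; induction k. rewrite Nat.mul_0_l, Nat.add_0_r. reflexivity.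
  replace (t + S k * Pp n (S i))%nat with ((t + k * Pp n (S i)) + Pp n (S i))%nat by lia.
  rewrite (L_period n hpos hinc i c (S i)) by lia. exact IHk.
Qed.

Lemma L_mod n (hpos : forall k : nat, (1 <= k)%nat -> (0 < n k)%nat)
  (hinc : forall k : nat, (1 <= k)%nat -> (n k < n (S k))%nat) :
  forall i c t, lincomb (S i) c (vv n) t = lincomb (S i) c (vv n) (t mod Pp n (S i)).
Proof.
  intros i c t. rewrite <- (L_period_k n hpos hinc i c (t mod Pp n (S i)) (t / Pp n (S i))).
  pose proof (Nat.div_mod_eq t (Pp n (S i))).
  replace (t mod Pp n (S i) + t / Pp n (S i) * Pp n (S i))%nat with t by nia. reflexivity.
Qed.

Lemma lincomb_bounded n (hpos : forall k : nat, (1 <= k)%nat -> (0 < n k)%nat)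
  (hinc : forall k : nat, (1 <= k)%nat -> (n k < n (S k))%nat) :
  forall d c, exists M, forall t, Rabs (lincomb d c (vv n) t) <= M.
Proof.
  induction d; intros c. exists 0. intros t; simpl. rewrite Rabs_R0; lra.
  destruct (IHd c) as [M HM]. exists (M + Rabs (c d) * INR (Mm n d)).
  intros t; simpl. eapply Rle_trans. apply Rabs_triang.
  apply Rplus_le_compat. apply HM. rewrite Rabs_mult.
  apply Rmult_le_compat_l. apply Rabs_pos. apply vv_bound; auto.
Qed.

Lemma top_index n : forall d c, (exists t, lincomb d c (vv n) t <> 0) ->
  exists i, (i < d)%nat /\ c i <> 0 /\ forall t, lincomb d c (vv n) t = lincomb (S i) c (vv n) t.
Proof.
  induction d; intros c [t Ht]. simpl in Ht. lra.
  destruct (Req_EM_T (c d) 0) as [E|E].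
  - assert (Hd : forall t, lincomb (S d) c (vv n) t = lincomb d c (vv n) t).
    { intros; simpl. rewrite E. ring. }
    destruct (IHd c) as [i [Hi1 [Hi2 Hi3]]]. exists t. rewrite <- Hd. auto.
    exists i. repeat split; auto. intros; rewrite Hd; auto.
  - exists d. repeat split; auto.
Qed.

Lemma min_dist : forall (l : list R) a, ~ In a l ->
  exists del, 0 < del /\ forall y, In y l -> del <= Rabs (y - a).
Proof.
  induction l as [|y l IH]; intros a H.
  - exists 1. split. lra. intros y [].
  - destruct (IH a) as [d [Hd1 Hd2]]. intros Hin; apply H; right; auto.
    assert (Hy : y <> a) by (intros E; apply H; left; auto).
    assert (Hp : 0 < Rabs (y - a)) by (apply Rabs_pos_lt; lra).
    exists (Rmin d (Rabs (y - a))). split. apply Rmin_pos; auto.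
    intros z [E|Hz]. subst z. apply Rmin_r. eapply Rle_trans. apply Rmin_l. auto.
Qed.
Lemma card_window n (hpos : forall k : nat, (1 <= k)%nat -> (0 < n k)%nat)
  (hinc : forall k : nat, (1 <= k)%nat -> (n k < n (S k))%nat) :
  forall i c (x : nat -> R), c i <> 0 -> (forall t, x t = lincomb (S i) c (vv n) t) ->
  exists m, (Mm n i <= m <= Pp n (S i))%nat /\ has_card (accum_pt x) m.
Proof.
  intros i c x Hc Hx.
  set (P := Pp n (S i)).
  assert (HP : (1 <= P)%nat) by (pose proof (Pp_pos n hpos hinc (S i)); unfold P; lia).
  set (l0 := map x (seq 0 P)).
  set (l := nodup Req_EM_T l0).
  assert (Hacc : forall a, accum_pt x a <-> In a l0).
  { intros a; split.
    - intros [phi [_ Hcv]].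
      destruct (in_dec Req_EM_T a l0) as [Hin|Hnin]; auto.
      destruct (min_dist l0 a Hnin) as [del [Hd1 Hd2]].
      destruct (Hcv del Hd1) as [N HN]. specialize (HN N (le_n N)).
      unfold R_dist in HN.
      assert (Hin : In (x (phi N)) l0).
      { unfold l0. apply in_map_iff. exists (phi N mod P)%nat. split.
        rewrite !Hx. symmetry. apply L_mod; auto.
        apply in_seq. pose proof (Nat.mod_upper_bound (phi N) P ltac:(lia)). lia. }
      specialize (Hd2 _ Hin). lra.
    - intros Hin. unfold l0 in Hin. apply in_map_iff in Hin. destruct Hin as [t0 [E Ht0]].
      exists (fun k => t0 + k * P)%nat. split.
      + intros k. nia.
      + intros eps Heps. exists 0%nat. intros k _. unfold R_dist.
        rewrite Hx, L_period_k, <- Hx, E; auto. unfold Rminus. rewrite Rplus_opp_r, Rabs_R0. lra. }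
  exists (length l). split.
  - split.
    + set (l1 := map (fun k => INR k * c i) (seq 0 (Mm n i))).
      assert (Hnd : NoDup l1).
      { apply Injective_map_NoDup. intros a b E. apply INR_eq. eapply Rmult_eq_reg_r; eauto.
        apply seq_NoDup. }
      assert (Hincl : incl l1 l).
      { intros y Hy. unfold l. apply nodup_In. unfold l1 in Hy. apply in_map_iff in Hy.
        destruct Hy as [k [E Hk]]. apply in_seq in Hk.
        unfold l0. apply in_map_iff. exists (k * Pp n i)%nat. split.
        - rewrite Hx. rewrite (lincomb_single _ _ _ _ i) by (try lia; intros j Hj Hji; apply vv_low; auto; lia).
          rewrite vv_diag by (auto; lia). rewrite <- E. ring.
        - apply in_seq. unfold P. rewrite PpS. pose proof (Pp_pos n hpos hinc i). nia. }
      pose proof (NoDup_incl_length Hnd Hincl). unfold l1 in H. rewrite length_map, length_seq in H. lia.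
    + assert (incl l l0) by (intros y Hy; unfold l in Hy; apply nodup_In in Hy; auto).
      pose proof (NoDup_incl_length (NoDup_nodup Req_EM_T l0) H).
      fold l in H0. unfold l0 in H0. rewrite length_map, length_seq in H0. lia.
  - exists l. split. apply NoDup_nodup. split. reflexivity.
    intros a. rewrite Hacc. unfold l. rewrite nodup_In. tauto.
Qed.
Theorem proposition2p6 (n : nat -> nat)
  (hpos : forall k : nat, (1 <= k)%nat -> (0 < n k)%nat)
  (hinc : forall k : nat, (1 <= k)%nat -> (n k < n (S k))%nat) :
  exists K : nat -> Prop,
    (forall k, K k -> (1 <= k)%nat) /\
    (forall N : nat, exists k, K k /\ (N < k)%nat) /\
    lineable (Lset (fun m : nat =>
       (2 <= m)%nat /\ ~ (exists k, K k /\ (n k <= m)%nat /\ (m < n (S k))%nat))).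
Proof.
  exists (fun k => exists j, k = (Pp n (S j) + 1)%nat). split; [|split].
  - intros k [j E]. lia.
  - intros N. exists (Pp n (S N) + 1)%nat. split. eauto.
    pose proof (Pp_pos n hpos hinc (S N)). lia.
  - exists (fun x => exists d c, forall t, x t = lincomb d c (vv n) t). split; [|split].
    + split; [|split; [|split]].
      * intros x [d [c Hx]]. destruct (lincomb_bounded n hpos hinc d c) as [M HM].
        exists M. intros t. rewrite Hx. auto.
      * exists 0%nat, (fun _ => 0). intros t. reflexivity.
      * intros x y [d1 [c1 H1]] [d2 [c2 H2]].
        exists (d1 + d2)%nat, (fun i => (if (i <? d1)%nat then c1 i else 0) + (if (i <? d2)%nat then c2 i else 0)).
        intros t. rewrite lincomb_add, lincomb_pad, Nat.add_comm, lincomb_pad, H1, H2. reflexivity.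
      * intros a x [d [c H]]. exists d, (fun i => a * c i). intros t. rewrite lincomb_scal, H. reflexivity.
    + intros N. exists (vv n). split.
      * intros i Hi. exists (S i), (fun j => if (j =? i)%nat then 1 else 0). intros t.
        simpl. rewrite lincomb_zero. rewrite Nat.eqb_refl. ring.
        intros j Hj. destruct (Nat.eqb_spec j i); [lia|reflexivity].
      * intros c Hc i Hi. specialize (Hc (Pp n i)).
        rewrite (lincomb_single _ _ _ _ i) in Hc.
        -- unfold vv in Hc. rewrite Nat.div_same, Nat.mod_small in Hc.
           simpl in Hc. lra. pose proof (Mm_ge2 n hpos hinc i). lia.
           pose proof (Pp_pos n hpos hinc i). lia.
        -- auto.
        -- intros j Hj Hji. destruct (Nat.lt_ge_cases j i).
           ++ rewrite <- (Nat.mul_1_l (Pp n i)). apply vv_low; auto.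
           ++ apply vv_high; auto. lia.
    + intros x [d [c Hx]].
      destruct (classic (exists t, x t <> 0)) as [[t Ht]|Hno].
      * left. destruct (top_index n d c) as [i [Hi1 [Hi2 Hi3]]].
        { exists t. rewrite <- Hx. auto. }
        destruct (card_window n hpos hinc i c x Hi2) as [m [Hm1 Hm2]].
        { intros s. rewrite Hx. apply Hi3. }
        split.
        { destruct (lincomb_bounded n hpos hinc d c) as [M HM].
          exists M. intros s. rewrite Hx. auto. }
        exists m. split; auto. split.
        { pose proof (Mm_ge2 n hpos hinc i). lia. }
        intros [k [[j E] [Hk1 Hk2]]]. subst k.
        replace (S (Pp n (S j) + 1)) with (Pp n (S j) + 2)%nat in Hk2 by lia.
        rewrite <- MmS in Hk2.
        destruct (Nat.lt_ge_cases j i).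
        -- pose proof (Mm_le n hpos hinc (S j) i ltac:(lia) ltac:(lia)). lia.
        -- pose proof (n_ge n hpos hinc (Pp n (S j) + 1) ltac:(lia)).
           pose proof (Pp_le n hpos hinc (S i) (S j) ltac:(lia)). lia.
      * right. apply functional_extensionality. intros t. unfold zero_seq.
        apply NNPP. intros H. apply Hno. eauto.
Qed.
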